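(* Let $R$ be a commutative ring, $M$ a non-zero $R$-module and $N\leq M$ a PS-hollow submodule. If $I$ is a minimal element (w.r.t. inclusion) of $A:=\{I\leq R \text{ ideal}: N\subseteq IM\}$, then $I$ is a hollow ideal of $R$, i.e. whenever $I=J+K$ for ideals $J,K\leq R$, we have $J=I$ or $K=I$.
   Context: An $R$-submodule $N\leq M$ is PS-hollow iff for every ideal $I\leq R$ and every submodule $L\leq M$: $N\subseteq IM+L$ implies $N\subseteq IM$ or $N\subseteq L$. *)

(* Defs.v *)
From HB Require Import structures.
From mathcomp Require Import all_boot all_order all_algebra.
Set Implicit Arguments. Unset Strict Implicit.
Import GRing.Theory.
Local Open Scope ring_scope.

Definition subset_of (T : Type) (A B : T -> Prop) : Prop := forall x, A x -> B x.
Definition same_set (T : Type) (A B : T -> Prop) : Prop := forall x, A x <-> B x.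

Definition is_ideal (R : comPzRingType) (I : R -> Prop) : Prop :=
  [/\ I 0, (forall x y, I x -> I y -> I (x + y)) & (forall r x, I x -> I (r * x))].

Definition is_submod (R : comPzRingType) (M : lmodType R) (N : M -> Prop) : Prop :=
  [/\ N 0, (forall x y, N x -> N y -> N (x + y)) & (forall (r : R) x, N x -> N (r *: x))].

Definition ideal_mod {R : comPzRingType} (M : lmodType R) (I : R -> Prop) : M -> Prop :=
  fun x => exists (n : nat) (a : 'I_n -> R) (m : 'I_n -> M),
    (forall k, I (a k)) /\ x = \sum_(k < n) a k *: m k.
Arguments ideal_mod {R} M I _.

Definition set_add (V : zmodType) (A B : V -> Prop) : V -> Prop :=
  fun x => exists y z, A y /\ B z /\ x = y + z.

Definition PS_hollow (R : comPzRingType) (M : lmodType R) (N : M -> Prop) : Prop :=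
  is_submod N /\
  forall (I : R -> Prop) (L : M -> Prop), is_ideal I -> is_submod L ->
    subset_of N (set_add (ideal_mod M I) L) ->
    subset_of N (ideal_mod M I) \/ subset_of N L.

(* Main.v *)
Require Import Defs.
From mathcomp Require Import all_boot all_order all_algebra.
Local Open Scope ring_scope.
Import GRing.Theory.

Lemma ideal_mod_submod (R : comPzRingType) (M : lmodType R) (K : R -> Prop) :
  is_submod (ideal_mod M K).
Proof.
split.
- by exists 0%N, (fun _ => 0), (fun _ => 0); split=> [[]//|]; rewrite big_ord0.
- move=> x y [n1 [a1 [m1 [Ha1 ->]]]] [n2 [a2 [m2 [Ha2 ->]]]].
  exists (n1 + n2)%N,
    (fun i => match split i with inl j => a1 j | inr j => a2 j end),
    (fun i => match split i with inl j => m1 j | inr j => m2 j end).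
  split.
  + by move=> k; case: (split k).
  + rewrite big_split_ord /=; congr (_ + _); apply: eq_bigr => i _.
    * by rewrite (unsplitK (inl i)).
    * by rewrite (unsplitK (inr i)).
- move=> r x [n [a [m [Ha ->]]]].
  exists n, a, (fun k => r *: m k); split=> //.
  rewrite scaler_sumr; apply: eq_bigr => k _.
  by rewrite !scalerA mulrC.
Qed.

Theorem lemma5p3 (R : comPzRingType) (M : lmodType R) (N : M -> Prop) (I : R -> Prop) :
  (exists m : M, m != 0) ->
  PS_hollow N ->
  is_ideal I ->
  subset_of N (ideal_mod M I) ->
  (forall J : R -> Prop, is_ideal J -> subset_of N (ideal_mod M J) ->
     subset_of J I -> same_set J I) ->
  forall J K : R -> Prop, is_ideal J -> is_ideal K ->
    same_set I (set_add J K) -> same_set J I \/ same_set K I.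
Proof.
move=> _ [_ HPS] HI HNI Hmin J K HJ HK HIJK.
have JI : subset_of J I.
  move=> x Jx; apply/HIJK; exists x, 0; split=> //; split; last by rewrite addr0.
  by case: HK.
have KI : subset_of K I.
  move=> x Kx; apply/HIJK; exists 0, x; split; first by case: HJ.
  by split=> //; rewrite add0r.
have sub : subset_of N (set_add (ideal_mod M J) (ideal_mod M K)).
  move=> x /HNI [n [a [m [Ha ->]]]].
  have: forall k : 'I_n, exists p : R * R, [/\ J p.1, K p.2 & a k = p.1 + p.2].
    move=> k; have /HIJK [y [z [Jy [Kz e]]]] := Ha k.
    by exists (y, z).
  case/fin_all_exists=> p Hp.
  exists (\sum_(k < n) (p k).1 *: m k), (\sum_(k < n) (p k).2 *: m k).
  split; first by exists n, (fun k => (p k).1), m; split=> // k; case: (Hp k).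
  split; first by exists n, (fun k => (p k).2), m; split=> // k; case: (Hp k).
  rewrite -big_split /=; apply: eq_bigr => k _.
  by case: (Hp k) => _ _ ->; rewrite scalerDl.
case: (HPS J (ideal_mod M K) HJ (@ideal_mod_submod R M K) sub) => H.
- by left; apply: Hmin.
- by right; apply: Hmin.
Qed.
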